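(* Let $\mathbf{L}$ be a Euclidean modal logic and let $\mathcal{F}^{\rho}_{A,B}$ be a galaxy in $\mathcal{L}_2$. If $\mathbf{N}^{+}\times\{2\}\subseteq\mathtt{S}_{\mathbf{L}}$, then $\mathbf{L}$ is valid in $\mathcal{F}^{\rho}_{A,B}$.
   Context: A frame is a pair $(W,R)$ with $W$ non-empty and $R\subseteq W\times W$. Modal formulas (propositional variables, $\bot,\neg,\vee,\Box$) have standard Kripke semantics; validity means truth at all points under all valuations. A (normal) modal logic contains all tautologies and K axioms and is closed under uniform substitution, modus ponens and necessitation; a Euclidean modal logic is one not containing $\bot$ and containing $\Diamond\psi\to\Box\Diamond\psi$ for all $\psi$. For sets $A,B$ with $A\cap B=\emptyset$, $A\cup B\ne\emptyset$ and $\rho:A\to\wp(B)$, the galaxy $\mathcal{F}^{\rho}_{A,B}$ has universe $A\cup B$ and relation $\bigcup_{s\in A}(\{s\}\times\rho(s))\cup(B\times B)$. $\mathcal{L}_2$ is the class of galaxies with $|A|\ge4$, $|B|\ge4$ and $|B\setminus\rho(s)|=2$ for all $s\in A$. $\mathbf{N}^{+}=\{1,2,\dots\}$, $\mathbf{N}^{-}=\{-1,0,1,\dots\}$. For $m\in\mathbf{N}^{+}$, $n\ge0$, the flower $\mathcal{F}_m^n$ has universe $\{0,\dots,m+n\}$ and relation $(\{0\}\times\{1,\dots,m\})\cup\{1,\dots,m+n\}^2$; $\mathcal{F}_m^{-1}$ has universe $\{1,\dots,m\}$ and relation $\{1,\dots,m\}^2$. $\mathtt{S}_{\mathbf{L}}=\{(m,n)\in\mathbf{N}^{+}\times\mathbf{N}^{-}:\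 \mathbf{L}\text{ valid in }\mathcal{F}_m^n\}$. *)

(* Defs.v *)
From Stdlib Require Import ZArith Arith.

Inductive form : Type :=
| Var : nat -> form
| Bot : form
| Neg : form -> form
| Or : form -> form -> form
| Box : form -> form.

Definition Imp (a b : form) : form := Or (Neg a) b.
Definition Dia (a : form) : form := Neg (Box (Neg a)).

Record frame : Type := Frame { W : Type; R : W -> W -> Prop }.

Fixpoint sat (F : frame) (V : nat -> W F -> Prop) (w : W F) (f : form) : Prop :=
  match f with
  | Var n => V n w
  | Bot => False
  | Neg a => ~ sat F V w a
  | Or a b => sat F V w a \/ sat F V w b
  | Box a => forall v, R F w v -> sat F V v a
  end.

Definition valid_in (F : frame) (f : form) : Prop :=
  forall (V : nat -> W F -> Prop) (w : W F), sat F V w f.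

Definition logic_valid_in (L : form -> Prop) (F : frame) : Prop :=
  forall f, L f -> valid_in F f.

(* Propositional tautologies: true under every classical truth assignment
   to the maximal non-propositional subformulas (variables and boxed formulas). *)
Fixpoint tv (v : form -> Prop) (f : form) : Prop :=
  match f with
  | Var n => v (Var n)
  | Bot => False
  | Neg a => ~ tv v a
  | Or a b => tv v a \/ tv v b
  | Box a => v (Box a)
  end.

Definition tautology (f : form) : Prop := forall v : form -> Prop, tv v f.

Fixpoint subst (s : nat -> form) (f : form) : form :=
  match f with
  | Var n => s n
  | Bot => Bot
  | Neg a => Neg (subst s a)
  | Or a b => Or (subst s a) (subst s b)
  | Box a => Box (subst s a)
  end.

Definition K_axiom : form :=
  Imp (Box (Imp (Var 0) (Var 1))) (Imp (Box (Var 0)) (Box (Var 1))).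

Definition normal_modal_logic (L : form -> Prop) : Prop :=
  (forall f, tautology f -> L f) /\
  L K_axiom /\
  (forall s f, L f -> L (subst s f)) /\
  (forall a b, L (Imp a b) -> L a -> L b) /\
  (forall a, L a -> L (Box a)).

Definition euclidean_logic (L : form -> Prop) : Prop :=
  normal_modal_logic L /\ ~ L Bot /\
  (forall psi, L (Imp (Dia psi) (Box (Dia psi)))).

(* Galaxy F^rho_{A,B}: universe is the disjoint union A + B,
   relation  U_{s in A} {s} x rho(s)  union  B x B. *)
Definition galaxy_rel (A B : Type) (rho : A -> B -> Prop) (x y : A + B) : Prop :=
  match x, y with
  | inl s, inr b => rho s b
  | inr _, inr _ => True
  | _, _ => False
  end.

Definition galaxy (A B : Type) (rho : A -> B -> Prop) : frame :=
  Frame (A + B) (galaxy_rel A B rho).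

Definition card_ge4 (T : Type) : Prop :=
  exists a1 a2 a3 a4 : T,
    a1 <> a2 /\ a1 <> a3 /\ a1 <> a4 /\ a2 <> a3 /\ a2 <> a4 /\ a3 <> a4.

Definition card_eq2 {T : Type} (P : T -> Prop) : Prop :=
  exists b1 b2 : T, b1 <> b2 /\ P b1 /\ P b2 /\ (forall b, P b -> b = b1 \/ b = b2).

Definition in_L2 (A B : Type) (rho : A -> B -> Prop) : Prop :=
  card_ge4 A /\ card_ge4 B /\ (forall s : A, card_eq2 (fun b => ~ rho s b)).

Definition flower_dom (m : nat) (n : Z) (k : nat) : Prop :=
  if (0 <=? n)%Z then k <= m + Z.to_nat n else 1 <= k <= m.

Definition flower_rel (m : nat) (n : Z) (k l : nat) : Prop :=
  if (0 <=? n)%Z then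
    (k = 0 /\ 1 <= l <= m) \/
    (1 <= k <= m + Z.to_nat n /\ 1 <= l <= m + Z.to_nat n)
  else (1 <= k <= m /\ 1 <= l <= m).

Definition flower (m : nat) (n : Z) : frame :=
  Frame {k : nat | flower_dom m n k}
        (fun x y => flower_rel m n (proj1_sig x) (proj1_sig y)).

Definition S_L (L : form -> Prop) (m : nat) (n : Z) : Prop :=
  1 <= m /\ (-1 <= n)%Z /\ logic_valid_in L (flower m n).

(* Main.v *)
Require Import Defs.
From Stdlib Require Import ZArith Arith.
From Stdlib Require Import Lia ClassicalEpsilon Classical.

Fixpoint vb (N : nat) (f : form) : Prop :=
  match f with
  | Var n => n < N
  | Bot => True
  | Neg a => vb N a
  | Or a b => vb N a /\ vb N b
  | Box a => vb N a
  end.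

Fixpoint mv (f : form) : nat :=
  match f with
  | Var n => S n
  | Bot => 0
  | Neg a => mv a
  | Or a b => Nat.max (mv a) (mv b)
  | Box a => mv a
  end.

Lemma vb_mono : forall f N N', vb N f -> N <= N' -> vb N' f.
Proof. induction f; simpl; intros; try tauto; try lia; eauto.
  destruct H; split; eauto. Qed.

Lemma vb_mv : forall f, vb (mv f) f.
Proof. induction f; simpl; auto.
  split; eapply vb_mono; eauto; lia. Qed.

Lemma bisim (F1 F2 : frame) V1 V2 (Z : W F1 -> W F2 -> Prop) N
 (Hat: forall x z n, Z x z -> n < N -> (V1 n x <-> V2 n z))
 (Hf: forall x z y, Z x z -> R F1 x y -> exists z', R F2 z z' /\ Z y z')
 (Hb: forall x z z', Z x z -> R F2 z z' -> exists y, R F1 x y /\ Z y z') :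
 forall f, vb N f -> forall x z, Z x z -> (sat F1 V1 x f <-> sat F2 V2 z f).
Proof.
  induction f; simpl; intros Hv x z HZ.
  - apply Hat; auto.
  - tauto.
  - rewrite (IHf Hv x z HZ). tauto.
  - destruct Hv as [H1 H2]. rewrite (IHf1 H1 x z HZ), (IHf2 H2 x z HZ). tauto.
  - split; intros H v Hr.
    + destruct (Hb _ _ _ HZ Hr) as [y [Hy Zy]]. apply (IHf Hv y v Zy). auto.
    + destruct (Hf _ _ _ HZ Hr) as [z' [Hz Zz]]. apply (IHf Hv v z' Zz). auto.
Qed.

Fixpoint code {B : Type} (P : nat -> B -> Prop) (N : nat) (b : B) : nat :=
  match N with
  | 0 => 0
  | S N => 2 * code P N b + (if excluded_middle_informative (P N b) then 1 else 0)
  end.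

Lemma code_lt {B} (P : nat -> B -> Prop) N b : code P N b < 2 ^ N.
Proof. induction N; simpl; [lia|].
  destruct (excluded_middle_informative (P N b)); lia. Qed.

Lemma code_eq {B} (P : nat -> B -> Prop) N b b' :
  code P N b = code P N b' -> forall n, n < N -> (P n b <-> P n b').
Proof. induction N; simpl; intros H n Hn; [lia|].
  destruct (excluded_middle_informative (P N b));
  destruct (excluded_middle_informative (P N b')).
  - assert (n = N \/ n < N) as [->|Hl] by lia; [tauto|]. apply IHN; auto; lia.
  - lia.
  - lia.
  - assert (n = N \/ n < N) as [->|Hl] by lia; [tauto|]. apply IHN; auto; lia.
Qed.

Lemma fd m y : y <= m + 2 -> flower_dom m 2 y.
Proof. intro H. exact H. Qed.
Lemma fd' m y : flower_dom m 2 y -> y <= m + 2.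
Proof. intro H. exact H. Qed.
Lemma fr m k l : flower_rel m 2 k l <-> (k = 0 /\ 1 <= l <= m) \/ (1 <= k <= m + 2 /\ 1 <= l <= m + 2).
Proof. reflexivity. Qed.

Theorem lemma37 (L : form -> Prop) (A B : Type) (rho : A -> B -> Prop) :
  euclidean_logic L ->
  in_L2 A B rho ->
  (forall m : nat, 1 <= m -> S_L L m 2%Z) ->
  logic_valid_in L (galaxy A B rho).
Proof.
  intros _ [[a0 _] [HB4 Hrho]] HS f Lf V w.
  set (N := mv f).
  set (m := 2 ^ N).
  assert (Hm : 1 <= m) by (unfold m; pose proof (Nat.pow_nonzero 2 N ltac:(lia)); lia).
  destruct (HS m Hm) as [_ [_ Hval]].
  specialize (Hval f Lf).
  set (s := match w with inl s => s | inr _ => a0 end).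
  destruct (Hrho s) as [b1 [b2 [Hb12 [Hn1 [Hn2 Hnb]]]]].
  set (P := fun n (b:B) => V n (inr b)).
  assert (Hex0 : exists b0, rho s b0).
  { destruct HB4 as [c1 [c2 [c3 [c4 Hd]]]].
    destruct (classic (rho s c1)); [eauto|].
    destruct (classic (rho s c2)); [eauto|].
    destruct (classic (rho s c3)); [eauto|].
    destruct (classic (rho s c4)); [eauto|].
    exfalso.
    destruct (Hnb c1 H), (Hnb c2 H0), (Hnb c3 H1), (Hnb c4 H2); subst; intuition congruence. }
  destruct Hex0 as [b0 Hb0].
  set (g := fun k => epsilon (inhabits b0)
      (fun b => rho s b /\ (code P N b = k - 1 \/ ~ exists b', rho s b' /\ code P N b' = k - 1))).
  assert (Hg : forall k, rho s (g k) /\ (code P N (g k) = k - 1 \/ ~ exists b', rho s b' /\ code P N b' = k - 1)).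
  { intro k. unfold g. apply epsilon_spec.
    destruct (classic (exists b', rho s b' /\ code P N b' = k - 1)) as [[b' Hb']|Hno].
    - exists b'; tauto.
    - exists b0; tauto. }
  set (h := fun k => if k <=? m then g k else if k =? m + 1 then b1 else b2).
  set (V' := fun n (x : W (flower m 2)) =>
     match proj1_sig x with 0 => V n (inl s) | k => V n (inr (h k)) end).
  set (agree := fun b b' => forall n, n < N -> (P n b <-> P n b')).
  set (Z := fun (x : W (flower m 2)) (z : W (galaxy A B rho)) =>
     (proj1_sig x = 0 /\ z = inl s) \/
     (1 <= proj1_sig x /\ exists b, z = inr b /\ agree (h (proj1_sig x)) b)).
  assert (Hcovr : forall b, rho s b -> code P N b + 1 <= m /\ agree (h (code P N b + 1)) b).
  { intros b Hb. pose proof (code_lt P N b). split; [unfold m; lia|].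
    unfold h. replace (code P N b + 1 <=? m) with true by (symmetry; apply Nat.leb_le; unfold m; lia).
    destruct (Hg (code P N b + 1)) as [_ [Hc|Hc]].
    - intros n Hn. symmetry. apply code_eq with (N := N); auto. lia.
    - exfalso; apply Hc; exists b; split; auto; lia. }
  assert (Hcov : forall b, exists y, 1 <= y <= m + 2 /\ agree (h y) b).
  { intro b. destruct (classic (rho s b)) as [Hb|Hb].
    - destruct (Hcovr b Hb). exists (code P N b + 1). split; auto; lia.
    - destruct (Hnb b Hb) as [->| ->].
      + exists (m + 1). split; [lia|]. unfold h.
        replace (m + 1 <=? m) with false by (symmetry; apply Nat.leb_gt; lia).
        rewrite Nat.eqb_refl. intros n _; tauto.
      + exists (m + 2). split; [lia|]. unfold h.
        replace (m + 2 <=? m) with false by (symmetry; apply Nat.leb_gt; lia).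
        replace (m + 2 =? m + 1) with false by (symmetry; apply Nat.eqb_neq; lia).
        intros n _; tauto. }
  assert (mk : forall y, y <= m + 2 -> W (flower m 2)).
  { intros y Hy. exists y. exact Hy. }
  assert (Hx0 : exists x0, Z x0 w).
  { destruct w as [a|b].
    - exists (exist _ 0 (fd m 0 ltac:(lia))). left. simpl. split; auto.
    - destruct (Hcov b) as [y [Hy Ha]].
      exists (exist _ y (fd m y ltac:(lia))). right. simpl. split; [lia|].
      exists b; auto. }
  destruct Hx0 as [x0 Hx0].
  assert (Hat : forall x z n, Z x z -> n < N -> (V' n x <-> V n z)).
  { intros [k hk] z n HZ Hn. unfold V'; simpl. destruct HZ as [[Hk ->]|[Hk [b [-> Ha]]]]; simpl in *.
    + subst k. tauto.
    + destruct k; [lia|]. apply Ha; auto.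
  }
  assert (Hf : forall x z y, Z x z -> R (flower m 2) x y -> exists z', R (galaxy A B rho) z z' /\ Z y z').
  { intros [k hk] z [y hy] HZ Hr. unfold Z in *; simpl in *.
    apply fr in Hr.
    destruct HZ as [[Hk ->]|[Hk [b [-> Ha]]]].
    + subst k. destruct Hr as [[_ Hy]|Hr]; [|lia].
      exists (inr (h y)). split.
      * simpl. unfold h. replace (y <=? m) with true by (symmetry; apply Nat.leb_le; lia). apply Hg.
      * right. split; [lia|]. exists (h y). split; auto. intros n _; tauto.
    + destruct Hr as [Hr|Hr]; [lia|].
      exists (inr (h y)). split; [simpl; auto|].
      right. split; [lia|]. exists (h y). split; auto. intros n _; tauto.
  }
  assert (Hb : forall x z z', Z x z -> R (galaxy A B rho) z z' -> exists y, R (flower m 2) x y /\ Z y z').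
  { intros [k hk] z z' HZ Hr. unfold Z in *; simpl in *.
    destruct HZ as [[Hk ->]|[Hk [b [-> Ha]]]].
    + subst k. destruct z' as [a|b']; simpl in Hr; [contradiction|].
      destruct (Hcovr b' Hr) as [Hle Ha].
      exists (exist _ (code P N b' + 1) (fd m (code P N b' + 1) ltac:(lia))).
      simpl. split.
      * apply fr. left. lia.
      * right. split; [lia|]. exists b'. auto.
    + destruct z' as [a|b']; simpl in Hr; [contradiction|].
      destruct (Hcov b') as [y [Hy Ha']].
      exists (exist _ y (fd m y ltac:(lia))).
      simpl. split.
      * apply fr. right. apply fd' in hk. lia.
      * right. split; [lia|]. exists b'. auto.
  }
  apply (proj1 (bisim (flower m 2) (galaxy A B rho) V' V Z N Hat Hf Hb f (vb_mv f) x0 w Hx0)).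
  apply Hval.
Qed.
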